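(* Every central extension of multiplicative Lie algebras is isoclinic to a stem extension.
   Context: A multiplicative Lie algebra is a group $(G,\cdot)$ with a binary operation $\star$ such that for all $x,y,z\in G$: $x\star x=1$; $x\star(yz)=(x\star y)\,{}^y(x\star z)$; $(xy)\star z={}^x(y\star z)(x\star z)$; $((x\star y)\star{}^yz)((y\star z)\star{}^zx)((z\star x)\star{}^xy)=1$; ${}^z(x\star y)={}^zx\star{}^zy$, where ${}^xy=xyx^{-1}$. $Z(G)$ is the group center, $LZ(G)=\{x: x\star y=1\ \forall y\}$, $\mathcal Z(G)=LZ(G)\cap Z(G)$; $[x,y]$ is the group commutator; ${}^M[G,G]=(G\star G)[G,G]$ with $G\star G$ the ideal generated by all $a\star b$. A short exact sequence $1\to H\xrightarrow{\alpha}G\xrightarrow{\beta}K\to1$ of multiplicative Lie algebras is a central extension if $\alpha(H)\subseteq\mathcal Z(G)$, and a stem extension if moreover $\alpha(H)\subseteq{}^M[G,G]$. Two central extensions $1\to H_i\to G_i\xrightarrow{\beta_i}K_i\to1$ are isoclinic if there are multiplicative Lie algebra isomorphisms $\lambda:K_1\to K_2$, $\mu:{}^M[G_1,G_1]\to{}^M[G_2,G_2]$ with $\mu([g,g'])=[h,h']$ and $\mu(g\star g')=h\star h'$ whenever $g,g'\in G_1$, $h,h'\in G_2$ satisfy $\beta_2(h)=\lambda\beta_1(g)$, $\beta_2(h')=\lambda\beta_1(g')$. *)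

(* Defs.v *)
Set Implicit Arguments.

Record MLA := {
  car :> Type;
  mul : car -> car -> car;
  one : car;
  inv : car -> car;
  star : car -> car -> car;
  mulA : forall x y z, mul x (mul y z) = mul (mul x y) z;
  mul1x : forall x, mul one x = x;
  mulx1 : forall x, mul x one = x;
  mulVx : forall x, mul (inv x) x = one;
  mulxV : forall x, mul x (inv x) = one;
  (* conjugation  ^x y = x y x^-1 is written out explicitly below *)
  star_xx : forall x, star x x = one;
  star_xM : forall x y z,
      star x (mul y z) = mul (star x y) (mul (mul y (star x z)) (inv y));
  star_Mx : forall x y z,
      star (mul x y) z = mul (mul (mul x (star y z)) (inv x)) (star x z);
  star_jacobi : forall x y z,
      mul (mul (star (star x y) (mul (mul y z) (inv y)))
               (star (star y z) (mul (mul z x) (inv z))))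
          (star (star z x) (mul (mul x y) (inv x))) = one;
  star_conj : forall x y z,
      mul (mul z (star x y)) (inv z)
      = star (mul (mul z x) (inv z)) (mul (mul z y) (inv z))
}.

Arguments mul {m}.
Arguments one {m}.
Arguments inv {m}.
Arguments star {m}.

Definition conjl {G : MLA} (x y : G) : G := mul (mul x y) (inv x).
Definition commg {G : MLA} (x y : G) : G := mul (mul (mul x y) (inv x)) (inv y).

Definition subgroup {G : MLA} (S : G -> Prop) : Prop :=
  S one /\ (forall x y, S x -> S y -> S (mul x y)) /\ (forall x, S x -> S (inv x)).

Definition ideal {G : MLA} (L : G -> Prop) : Prop :=
  subgroup L /\ (forall g l, L l -> L (conjl g l)) /\ (forall g l, L l -> L (star g l)).

Definition starGG (G : MLA) (x : G) : Prop :=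
  forall L : G -> Prop, ideal L -> (forall a b : G, L (star a b)) -> L x.

Definition commGG (G : MLA) (x : G) : Prop :=
  forall S : G -> Prop, subgroup S -> (forall a b : G, S (commg a b)) -> S x.

Definition MGG (G : MLA) (x : G) : Prop :=
  exists a b, starGG G a /\ commGG G b /\ x = mul a b.

Definition center (G : MLA) (x : G) : Prop := forall y : G, mul x y = mul y x.
Definition LZ (G : MLA) (x : G) : Prop := forall y : G, star x y = one.
Definition MLZ (G : MLA) (x : G) : Prop := LZ G x /\ center G x.

Definition mla_hom {G1 G2 : MLA} (f : G1 -> G2) : Prop :=
  (forall x y, f (mul x y) = mul (f x) (f y)) /\
  (forall x y, f (star x y) = star (f x) (f y)).

Definition mla_iso {G1 G2 : MLA} (f : G1 -> G2) : Prop :=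
  mla_hom f /\ (forall x y, f x = f y -> x = y) /\ (forall z, exists x, f x = z).

Definition short_exact {H G K : MLA} (a : H -> G) (b : G -> K) : Prop :=
  mla_hom a /\ mla_hom b /\
  (forall x y, a x = a y -> x = y) /\ (forall z, exists g, b g = z) /\
  (forall g, b g = one <-> exists h, a h = g).

Definition central_ext {H G K : MLA} (a : H -> G) (b : G -> K) : Prop :=
  short_exact a b /\ (forall h, MLZ G (a h)).

Definition stem_ext {H G K : MLA} (a : H -> G) (b : G -> K) : Prop :=
  central_ext a b /\ (forall h, MGG G (a h)).

(* mu : ^M[G1,G1] -> ^M[G2,G2] is a multiplicative Lie algebra isomorphism,
   represented by a function on G1 whose restriction to ^M[G1,G1] is one. *)
Definition MGG_iso {G1 G2 : MLA} (mu : G1 -> G2) : Prop :=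
  (forall x, MGG G1 x -> MGG G2 (mu x)) /\
  (forall x y, MGG G1 x -> MGG G1 y -> mu (mul x y) = mul (mu x) (mu y)) /\
  (forall x y, MGG G1 x -> MGG G1 y -> mu (star x y) = star (mu x) (mu y)) /\
  (forall x y, MGG G1 x -> MGG G1 y -> mu x = mu y -> x = y) /\
  (forall z, MGG G2 z -> exists x, MGG G1 x /\ mu x = z).

Definition isoclinic {H1 G1 K1 H2 G2 K2 : MLA}
    (a1 : H1 -> G1) (b1 : G1 -> K1) (a2 : H2 -> G2) (b2 : G2 -> K2) : Prop :=
  exists (lam : K1 -> K2) (mu : G1 -> G2),
    mla_iso lam /\ MGG_iso mu /\
    forall (g g' : G1) (h h' : G2),
      b2 h = lam (b1 g) -> b2 h' = lam (b1 g') ->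
      mu (commg g g') = commg h h' /\ mu (star g g') = star h h'.

(* Main.v *)
Require Import Defs.
From Stdlib Require Import Classical ClassicalEpsilon FunctionalExtensionality PropExtensionality ProofIrrelevance.
From mathcomp Require classical_sets.
Set Bullet Behavior "Strict Subproofs".
Lemma zorn_sets (T : Type) (P : (T -> Prop) -> Prop) :
  (forall F : (T -> Prop) -> Prop, (forall X, F X -> P X) ->
     (forall X Y, F X -> F Y -> (forall x, X x -> Y x) \/ (forall x, Y x -> X x)) ->
     P (fun x => exists X, F X /\ X x)) ->
  exists A, P A /\ forall B, (forall x, A x -> B x) -> P B -> forall x, B x -> A x.
Proof.
  intros H.
  destruct (@classical_sets.Zorn_bigcup T P) as [A [PA HA]].
  - intros F HF Ht. 
    assert (E : classical_sets.bigcup F (fun X => X) = (fun x => exists X, F X /\ X x)).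
    { apply boolp.funext; intro x. apply boolp.propext. unfold classical_sets.bigcup. simpl.
      split; [intros [X H1 H2]; exists X; auto | intros [X [H1 H2]]; econstructor; eauto]. }
    rewrite E. apply H; auto.
  - exists A; split; auto. intros B AB PB x Bx.
    apply NNPP; intro nA. apply (HA B); auto. split; [exact AB|]. intro BA. apply nA, BA, Bx.
Qed.


Section Basic.
Context {G : MLA}.
Implicit Types x y z : G.

Lemma mul_cancel_l x y z : mul x y = mul x z -> y = z.
Proof.
  intro H. rewrite <- (mul1x _ y), <- (mul1x _ z), <- (mulVx _ x), <- !mulA, H. reflexivity.
Qed.

Lemma mul_cancel_r x y z : mul y x = mul z x -> y = z.
Proof.
  intro H. rewrite <- (mulx1 _ y), <- (mulx1 _ z), <- (mulxV _ x), !mulA, H. reflexivity.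
Qed.

Lemma inv_uniq x y : mul x y = one -> y = inv x.
Proof. intro H. apply (mul_cancel_l x). rewrite H, mulxV. reflexivity. Qed.

Lemma inv_inv x : inv (inv x) = x.
Proof. symmetry. apply inv_uniq. apply mulVx. Qed.

Lemma inv_mul x y : inv (mul x y) = mul (inv y) (inv x).
Proof.
  symmetry. apply inv_uniq. rewrite !mulA, <- (mulA _ x y), mulxV, mulx1, mulxV. reflexivity.
Qed.

Lemma inv_one : inv (@one G) = one.
Proof. symmetry. apply inv_uniq. apply mul1x. Qed.

Lemma mul_idem x : mul x x = x -> x = one.
Proof. intro H. apply (mul_cancel_l x). rewrite H, mulx1. reflexivity. Qed.

Lemma star_one_l y : star one y = one.
Proof.
  apply mul_idem. pose proof (star_Mx G one one y) as H.
  rewrite mul1x, mul1x, inv_one, mulx1 in H. symmetry; exact H.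
Qed.

Lemma star_one_r x : star x one = one.
Proof.
  apply mul_idem. pose proof (star_xM G x one one) as H.
  rewrite mul1x, mul1x, inv_one, mulx1 in H. symmetry; exact H.
Qed.

Lemma mulVK a x : mul (mul a (inv x)) x = a.
Proof. rewrite <- mulA, mulVx, mulx1. reflexivity. Qed.
Lemma mulKV a x : mul (mul a x) (inv x) = a.
Proof. rewrite <- mulA, mulxV, mulx1. reflexivity. Qed.

Ltac gsimpl := repeat (rewrite ?mulA, ?mulVK, ?mulKV, ?mulVx, ?mulxV, ?mulx1, ?mul1x, ?inv_inv, ?inv_one, ?inv_mul).

Lemma conj_one_inv x y : mul (mul x y) (inv x) = one -> y = one.
Proof.
  intro H. apply (mul_cancel_l x). rewrite mulx1. apply (mul_cancel_r (inv x)). rewrite H, mulxV. reflexivity.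
Qed.

Lemma star_anti x y : star y x = inv (star x y).
Proof.
  pose proof (star_xx G (mul x y)) as H.
  rewrite star_Mx, !star_xM, !star_xx, mulx1, mulxV, mulx1, mul1x in H.
  rewrite <- (mulx1 _ (star y x)). rewrite <- (mulxV _ (star x y)), mulA.
  assert (E: mul (star y x) (star x y) = one).
  { apply (conj_one_inv x). rewrite <- H. gsimpl. reflexivity. }
  rewrite E, mul1x. reflexivity.
Qed.

Lemma LZ_r n y : LZ G n -> star y n = one.
Proof. intro H. rewrite star_anti, H, inv_one. reflexivity. Qed.

Lemma star_Mc x n y : LZ G n -> star (mul x n) y = star x y.
Proof. intro H. rewrite star_Mx, H, mulx1, mulxV, mul1x. reflexivity. Qed.

Lemma star_cM x y n : LZ G n -> star x (mul y n) = star x y.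
Proof. intro H. rewrite star_xM, (LZ_r _ _ H), mulx1, mulxV, mulx1. reflexivity. Qed.

Lemma center_inv n : center G n -> center G (inv n).
Proof. intros H y. apply (mul_cancel_l n). rewrite mulA, mulxV, mul1x, mulA, H, mulKV. reflexivity. Qed.

Lemma mul_c_r a n b : center G n -> mul (mul a n) b = mul (mul a b) n.
Proof. intro H. rewrite <- !mulA, H. reflexivity. Qed.

Lemma commg_Mc x n y : center G n -> commg (mul x n) y = commg x y.
Proof. intro H. unfold commg. gsimpl. rewrite (mul_c_r x n y H). gsimpl. reflexivity. Qed.

Lemma commg_cM x y n : center G n -> commg x (mul y n) = commg x y.
Proof. intro H. unfold commg. gsimpl. rewrite (mul_c_r (mul x y) n (inv x) H).
  rewrite (mul_c_r _ n (inv n) H). gsimpl. reflexivity. Qed.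

Lemma conjl_Mc x n y : center G n -> conjl (mul x n) y = conjl x y.
Proof. intro H. unfold conjl. gsimpl. rewrite (mul_c_r x n y H). gsimpl. reflexivity. Qed.

End Basic.

Ltac gsimpl := repeat (rewrite ?mulA, ?mulVK, ?mulKV, ?mulVx, ?mulxV, ?mulx1, ?mul1x, ?inv_inv, ?inv_one, ?inv_mul).

Section Hom.
Context {G1 G2 : MLA}.
Context {f : G1 -> G2}.
Hypothesis hf : mla_hom f.

Lemma hom_one : f one = one.
Proof. apply mul_idem. rewrite <- (proj1 hf), mul1x. reflexivity. Qed.

Lemma hom_inv x : f (inv x) = inv (f x).
Proof. apply inv_uniq. rewrite <- (proj1 hf), mulxV. apply hom_one. Qed.

Lemma hom_mul x y : f (mul x y) = mul (f x) (f y).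
Proof. apply (proj1 hf). Qed.

Lemma hom_star x y : f (star x y) = star (f x) (f y).
Proof. apply (proj2 hf). Qed.

Lemma hom_conjl x y : f (conjl x y) = conjl (f x) (f y).
Proof. unfold conjl. rewrite !hom_mul, hom_inv. reflexivity. Qed.

Lemma hom_commg x y : f (commg x y) = commg (f x) (f y).
Proof. unfold commg. rewrite !hom_mul, !hom_inv. reflexivity. Qed.
End Hom.
From Stdlib Require Import ZArith Lia.
Section Pow.
Context {G : MLA}.
Implicit Types x y : G.

Fixpoint pow x (n : nat) : G := match n with O => one | S k => mul x (pow x k) end.

Definition zpow x (z : Z) : G :=
  if Z.leb 0 z then pow x (Z.to_nat z) else inv (pow x (Z.to_nat (- z))).

Lemma pow_add x a b : pow x (a + b) = mul (pow x a) (pow x b).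
Proof. induction a; simpl. - rewrite mul1x; reflexivity. - rewrite IHa, mulA; reflexivity. Qed.

Lemma pow_comm x a b : mul (pow x a) (pow x b) = mul (pow x b) (pow x a).
Proof. rewrite <- !pow_add, Nat.add_comm. reflexivity. Qed.

Lemma pow_comm_inv x a b : mul (pow x a) (inv (pow x b)) = mul (inv (pow x b)) (pow x a).
Proof.
  apply (mul_cancel_l (pow x b)). rewrite mulA, pow_comm, <- mulA, mulxV, mulx1, mulA, mulxV, mul1x. reflexivity.
Qed.

Lemma zpow_nat x (a : nat) : zpow x (Z.of_nat a) = pow x a.
Proof. unfold zpow. replace (0 <=? Z.of_nat a)%Z with true by (symmetry; apply Z.leb_le; lia). rewrite Nat2Z.id. reflexivity. Qed.

Lemma zpow_negnat x (a : nat) : zpow x (- Z.of_nat a) = inv (pow x a).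
Proof.
  unfold zpow. destruct a as [|a].
  - simpl. rewrite inv_one. reflexivity.
  - replace (0 <=? - Z.of_nat (S a))%Z with false by (symmetry; apply Z.leb_gt; lia).
    rewrite Z.opp_involutive, Nat2Z.id. reflexivity.
Qed.

Lemma zpow_sub_nat x (a b : nat) : zpow x (Z.of_nat a - Z.of_nat b) = mul (pow x a) (inv (pow x b)).
Proof.
  destruct (Nat.le_gt_cases b a) as [H|H].
  - replace (Z.of_nat a - Z.of_nat b)%Z with (Z.of_nat (a - b)) by lia.
    rewrite zpow_nat. replace a with ((a - b) + b) at 2 by lia. rewrite pow_add, mulKV. reflexivity.
  - replace (Z.of_nat a - Z.of_nat b)%Z with (- Z.of_nat (b - a))%Z by lia.
    rewrite zpow_negnat. replace b with ((b - a) + a) at 2 by lia. rewrite pow_add, inv_mul.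
    rewrite mulA, mulxV, mul1x. reflexivity.
Qed.

Lemma Z_as_sub (i : Z) : i = (Z.of_nat (Z.to_nat i) - Z.of_nat (Z.to_nat (- i)))%Z.
Proof. lia. Qed.

Lemma zpow_add x (i j : Z) : zpow x (i + j) = mul (zpow x i) (zpow x j).
Proof.
  rewrite (Z_as_sub i), (Z_as_sub j).
  set (a := Z.to_nat i). set (b := Z.to_nat (-i)). set (c := Z.to_nat j). set (d := Z.to_nat (-j)).
  replace (Z.of_nat a - Z.of_nat b + (Z.of_nat c - Z.of_nat d))%Z with (Z.of_nat (a + c) - Z.of_nat (b + d))%Z by lia.
  rewrite !zpow_sub_nat, !pow_add, inv_mul.
  rewrite <- (mulA _ (pow x a) (inv (pow x b))).
  assert (E : mul (inv (pow x d)) (inv (pow x b)) = mul (inv (pow x b)) (inv (pow x d))) by (rewrite <- !inv_mul, pow_comm; reflexivity).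
  rewrite E, (mulA _ (inv (pow x b)) (pow x c)), <- pow_comm_inv, !mulA. reflexivity.
Qed.

Lemma zpow_opp x (i : Z) : zpow x (- i) = inv (zpow x i).
Proof. apply inv_uniq. rewrite <- zpow_add, Z.add_opp_diag_r. reflexivity. Qed.

Lemma zpow_zero x : zpow x 0 = one.
Proof. reflexivity. Qed.

Lemma zpow_one x : zpow x 1 = x.
Proof. unfold zpow. simpl. apply mulx1. Qed.

Lemma pow_mul_comm x y (n : nat) : mul x y = mul y x -> pow (mul x y) n = mul (pow x n) (pow y n).
Proof.
  intro C. assert (C' : forall k, mul (pow x k) y = mul y (pow x k)).
  { induction k; simpl. - rewrite mul1x, mulx1; reflexivity. - rewrite <- mulA, IHk, !mulA, C. reflexivity. }
  induction n; simpl. - rewrite mulx1; reflexivity.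
  - rewrite IHn. rewrite !mulA. f_equal. rewrite <- !mulA. f_equal. rewrite C'. reflexivity.
Qed.

Lemma zpow_mul_comm x y (i : Z) : mul x y = mul y x -> zpow (mul x y) i = mul (zpow x i) (zpow y i).
Proof.
  intro C. unfold zpow. destruct (0 <=? i)%Z.
  - apply pow_mul_comm; auto.
  - rewrite pow_mul_comm by auto. rewrite inv_mul.
    assert (C2 : forall a b, mul (pow x a) (pow y b) = mul (pow y b) (pow x a)).
    { intros a b. induction a; simpl. - rewrite mul1x, mulx1; reflexivity.
      - assert (C3 : forall k, mul x (pow y k) = mul (pow y k) x).
        { induction k; simpl. - rewrite mul1x, mulx1; reflexivity. - rewrite mulA, C, <- !mulA, IHk. reflexivity. }
        rewrite <- mulA, IHa, !mulA, C3. reflexivity. }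
    rewrite <- !inv_mul, C2. reflexivity.
Qed.

Lemma subgroup_zpow (S : G -> Prop) x i : subgroup S -> S x -> S (zpow x i).
Proof.
  intros [S1 [SM SI]] Sx.
  assert (P : forall n, S (pow x n)) by (induction n; simpl; auto).
  unfold zpow. destruct (0 <=? i)%Z; auto.
Qed.
End Pow.

Lemma hom_pow (G1 G2 : MLA) (f : G1 -> G2) x n : mla_hom f -> f (pow x n) = pow (f x) n.
Proof. intro hf. induction n; simpl. - apply (hom_one hf). - rewrite (hom_mul hf), IHn. reflexivity. Qed.

Lemma hom_zpow (G1 G2 : MLA) (f : G1 -> G2) x i : mla_hom f -> f (zpow x i) = zpow (f x) i.
Proof. intro hf. unfold zpow. destruct (0 <=? i)%Z. - apply hom_pow; auto. - rewrite (hom_inv hf), hom_pow; auto. Qed.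

Section Sub.
Context {G : MLA}.
Variable P : G -> Prop.
Hypothesis P1 : P one.
Hypothesis PM : forall x y, P x -> P y -> P (mul x y).
Hypothesis PI : forall x, P x -> P (inv x).
Hypothesis PS : forall x y, P x -> P y -> P (star x y).

Definition sub_car := {x : G | P x}.
Definition s_mul (x y : sub_car) : sub_car := exist _ (mul (proj1_sig x) (proj1_sig y)) (PM _ _ (proj2_sig x) (proj2_sig y)).
Definition s_one : sub_car := exist _ one P1.
Definition s_inv (x : sub_car) : sub_car := exist _ (inv (proj1_sig x)) (PI _ (proj2_sig x)).
Definition s_star (x y : sub_car) : sub_car := exist _ (star (proj1_sig x) (proj1_sig y)) (PS _ _ (proj2_sig x) (proj2_sig y)).

Lemma sub_eq (x y : sub_car) : proj1_sig x = proj1_sig y -> x = y.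
Proof. destruct x as [x px], y as [y py]; simpl. intro E. subst y. f_equal. apply proof_irrelevance. Qed.

Definition subMLA : MLA.
Proof.
  refine (@Build_MLA sub_car s_mul s_one s_inv s_star _ _ _ _ _ _ _ _ _ _);
  intros; apply sub_eq; simpl.
  - apply mulA. - apply mul1x. - apply mulx1. - apply mulVx. - apply mulxV. - apply star_xx.
  - apply star_xM. - apply star_Mx. - apply star_jacobi. - apply star_conj.
Defined.

Lemma subMLA_val_hom : @mla_hom subMLA G (@proj1_sig _ _).
Proof. split; reflexivity. Qed.
End Sub.

Section Ideals.
Context {G : MLA}.
Implicit Types g x y a b : G.

Lemma starGG_ideal : ideal (starGG G).
Proof.
  unfold starGG. split; [split; [|split]|split]; cbv beta.
  - intros L [[L1 _] _] _. exact L1.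
  - intros x y Hx Hy L HL Hs. pose proof HL as [[_ [LM _]] _]. apply LM; [apply Hx|apply Hy]; auto.
  - intros x Hx L HL Hs. pose proof HL as [[_ [_ LI]] _]. apply LI, Hx; auto.
  - intros g l Hl L HL Hs. pose proof HL as [_ [LC _]]. apply LC, Hl; auto.
  - intros g l Hl L HL Hs. pose proof HL as [_ [_ LS]]. apply LS, Hl; auto.
Qed.

Lemma starGG_star x y : starGG G (star x y).
Proof. intros L _ H. apply H. Qed.

Lemma commGG_subgroup : subgroup (commGG G).
Proof.
  unfold commGG. split; [|split]; cbv beta.
  - intros S [S1 _] _. exact S1.
  - intros x y Hx Hy S HS Hc. pose proof HS as [_ [SM _]]. apply SM; [apply Hx|apply Hy]; auto.
  - intros x Hx S HS Hc. pose proof HS as [_ [_ SI]]. apply SI; apply Hx; auto.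
Qed.

Lemma commGG_commg x y : commGG G (commg x y).
Proof. intros S _ H. apply H. Qed.

Lemma commGG_one : commGG G one. Proof. apply commGG_subgroup. Qed.
Lemma commGG_mul x y : commGG G x -> commGG G y -> commGG G (mul x y). Proof. apply commGG_subgroup. Qed.
Lemma commGG_inv x : commGG G x -> commGG G (inv x). Proof. apply commGG_subgroup. Qed.
Lemma starGG_one : starGG G one. Proof. apply starGG_ideal. Qed.
Lemma starGG_mul x y : starGG G x -> starGG G y -> starGG G (mul x y). Proof. apply starGG_ideal. Qed.
Lemma starGG_inv x : starGG G x -> starGG G (inv x). Proof. apply starGG_ideal. Qed.
Lemma starGG_conj g x : starGG G x -> starGG G (conjl g x). Proof. apply starGG_ideal. Qed.
Lemma starGG_starr g x : starGG G x -> starGG G (star g x). Proof. apply starGG_ideal. Qed.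

Lemma conjl_commg g x y : conjl g (commg x y) = commg (conjl g x) (conjl g y).
Proof. unfold conjl, commg. gsimpl. reflexivity. Qed.

Lemma commGG_conj g x : commGG G x -> commGG G (conjl g x).
Proof.
  intro Hx. set (S := fun x => forall g, commGG G (conjl g x)).
  assert (HS : subgroup S).
  { unfold S. split; [|split].
    - intro h. unfold conjl. rewrite mulx1, mulxV. apply commGG_one.
    - intros a b Ha Hb h. replace (conjl h (mul a b)) with (mul (conjl h a) (conjl h b)) by (unfold conjl; gsimpl; reflexivity).
      apply commGG_mul; auto.
    - intros a Ha h. replace (conjl h (inv a)) with (inv (conjl h a)) by (unfold conjl; gsimpl; reflexivity).
      apply commGG_inv; auto. }
  apply (Hx S HS). intros a b h. rewrite conjl_commg. apply commGG_commg.
Qed.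

Lemma MGG_one : MGG G one.
Proof. exists one, one. split; [apply starGG_one|split; [apply commGG_one|]]. rewrite mulx1; reflexivity. Qed.

Lemma MGG_mul x y : MGG G x -> MGG G y -> MGG G (mul x y).
Proof.
  intros [a [b [Ha [Hb E]]]] [a' [b' [Ha' [Hb' E']]]]. subst x y.
  exists (mul a a'), (mul (conjl (inv a') b) b'). split; [|split].
  - first [apply starGG_mul|apply starGG_inv]; auto.
  - apply commGG_mul; auto. apply commGG_conj; auto.
  - unfold conjl. gsimpl. reflexivity.
Qed.

Lemma MGG_inv x : MGG G x -> MGG G (inv x).
Proof.
  intros [a [b [Ha [Hb E]]]]. subst x.
  exists (inv a), (conjl a (inv b)). split; [|split].
  - first [apply starGG_mul|apply starGG_inv]; auto.
  - apply commGG_conj. apply commGG_inv; auto.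
  - unfold conjl. gsimpl. reflexivity.
Qed.

Lemma MGG_star x y : MGG G (star x y).
Proof. exists (star x y), one. split; [apply starGG_star|split; [apply commGG_one|]]. rewrite mulx1; reflexivity. Qed.

Lemma MGG_commg x y : MGG G (commg x y).
Proof. exists one, (commg x y). split; [apply starGG_one|split; [apply commGG_commg|]]. rewrite mul1x; reflexivity. Qed.
End Ideals.

Section Quot.
Context {P : MLA}.
Variable T : P -> Prop.
Hypothesis T1 : T one.
Hypothesis TM : forall x y, T x -> T y -> T (mul x y).
Hypothesis TI : forall x, T x -> T (inv x).
Hypothesis TC : forall x, T x -> center P x.
Hypothesis TZ : forall x, T x -> LZ P x.
Implicit Types x y z a b : P.

Definition rel x y := T (mul (inv x) y).
Definition qcar := {S : P -> Prop | exists x, S = rel x}.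
Definition cls x : qcar := exist _ (rel x) (ex_intro _ x eq_refl).
Definition rep (S : qcar) : P := proj1_sig (constructive_indefinite_description _ (proj2_sig S)).

Lemma rep_spec S : proj1_sig S = rel (rep S).
Proof. unfold rep. destruct (constructive_indefinite_description _ _) as [x Hx]. simpl. exact Hx. Qed.

Lemma qsig_eq (S1 S2 : qcar) : proj1_sig S1 = proj1_sig S2 -> S1 = S2.
Proof. destruct S1 as [s1 p1], S2 as [s2 p2]; simpl. intro E. subst s2. f_equal. apply proof_irrelevance. Qed.

Lemma cls_rep S : cls (rep S) = S.
Proof. apply qsig_eq. simpl. symmetry. apply rep_spec. Qed.

Lemma rel_refl x : rel x x.
Proof. unfold rel. rewrite mulVx. exact T1. Qed.

Lemma rel_sym x y : rel x y -> rel y x.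
Proof. unfold rel. intro H. replace (mul (inv y) x) with (inv (mul (inv x) y)) by (gsimpl; reflexivity). auto. Qed.

Lemma rel_trans x y z : rel x y -> rel y z -> rel x z.
Proof. unfold rel. intros H1 H2. replace (mul (inv x) z) with (mul (mul (inv x) y) (mul (inv y) z)) by (gsimpl; reflexivity). auto. Qed.

Lemma cls_eq x y : rel x y -> cls x = cls y.
Proof.
  intro H. apply qsig_eq. simpl. apply functional_extensionality. intro z. apply propositional_extensionality.
  split; intro H'. - eapply rel_trans; [apply rel_sym; exact H| exact H']. - eapply rel_trans; [exact H|exact H'].
Qed.

Lemma cls_eq_inv x y : cls x = cls y -> rel x y.
Proof.
  intro E. assert (E' : rel x = rel y) by (apply (f_equal (@proj1_sig _ _) E)).
  rewrite E'. apply rel_refl.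
Qed.

Lemma q_ind (S : qcar) : exists x, S = cls x.
Proof. exists (rep S). symmetry. apply cls_rep. Qed.

Lemma rel_rep x : rel (rep (cls x)) x.
Proof. apply cls_eq_inv. apply cls_rep. Qed.

Lemma rel_mul a a' b b' : rel a a' -> rel b b' -> rel (mul a b) (mul a' b').
Proof.
  unfold rel. intros H1 H2.
  replace (mul (inv (mul a b)) (mul a' b')) with (mul (mul (inv a) a') (mul (inv b) b')).
  - auto.
  - set (t := mul (inv a) a'). assert (Ea : a' = mul a t) by (unfold t; gsimpl; reflexivity).
    rewrite Ea. gsimpl. assert (Ht : T t) by exact H1. rewrite (TC _ Ht (inv b)). reflexivity.
Qed.

Lemma rel_inv a a' : rel a a' -> rel (inv a) (inv a').
Proof.
  unfold rel. intros H. set (t := mul (inv a) a') in H. assert (Ea : a' = mul a t) by (unfold t; gsimpl; reflexivity).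
  rewrite Ea. gsimpl. rewrite <- (TC _ (TI _ H) a). gsimpl. auto.
Qed.

Lemma rel_star a a' b b' : rel a a' -> rel b b' -> rel (star a b) (star a' b').
Proof.
  unfold rel. intros H1 H2.
  set (t := mul (inv a) a') in H1. assert (Ea : a' = mul a t) by (unfold t; gsimpl; reflexivity).
  set (s := mul (inv b) b') in H2. assert (Eb : b' = mul b s) by (unfold s; gsimpl; reflexivity).
  rewrite Ea, Eb, (star_Mc _ _ _ (TZ _ H1)), (star_cM _ _ _ (TZ _ H2)). rewrite mulVx. exact T1.
Qed.

Definition q_mul (S1 S2 : qcar) := cls (mul (rep S1) (rep S2)).
Definition q_one := cls one.
Definition q_inv (S : qcar) := cls (inv (rep S)).
Definition q_star (S1 S2 : qcar) := cls (star (rep S1) (rep S2)).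

Lemma q_mul_cls x y : q_mul (cls x) (cls y) = cls (mul x y).
Proof. apply cls_eq. apply rel_mul; apply rel_rep. Qed.
Lemma q_inv_cls x : q_inv (cls x) = cls (inv x).
Proof. apply cls_eq. apply rel_inv; apply rel_rep. Qed.
Lemma q_star_cls x y : q_star (cls x) (cls y) = cls (star x y).
Proof. apply cls_eq. apply rel_star; apply rel_rep. Qed.

Ltac qdestr := repeat match goal with S : qcar |- _ => let x := fresh "x" in destruct (q_ind S) as [x ->]; clear S end.
Ltac qsimpl := unfold q_one; repeat rewrite ?q_mul_cls, ?q_inv_cls, ?q_star_cls.

Definition quotMLA : MLA.
Proof.
  refine (@Build_MLA qcar q_mul q_one q_inv q_star _ _ _ _ _ _ _ _ _ _); intros; qdestr; qsimpl; f_equal.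
  - apply mulA. - apply mul1x. - apply mulx1. - apply mulVx. - apply mulxV. - apply star_xx.
  - apply star_xM. - apply star_Mx. - apply star_jacobi. - apply star_conj.
Defined.

Lemma cls_hom : @mla_hom P quotMLA cls.
Proof. split; intros; simpl; symmetry; [apply q_mul_cls|apply q_star_cls]. Qed.

Lemma cls_one_iff x : cls x = (one : quotMLA) <-> T x.
Proof.
  split.
  - intro E. apply cls_eq_inv in E. unfold rel in E. replace x with (inv (mul (inv x) one)) by (gsimpl; reflexivity). auto.
  - intro H. apply cls_eq. unfold rel. rewrite mulx1. auto.
Qed.

Lemma quot_ind (S : quotMLA) : exists x, S = cls x.
Proof. apply q_ind. Qed.
End Quot.

From Stdlib Require Import QArith Qcanon List.

Definition zq (z : Z) : Qc := Q2Qc (inject_Z z).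

Lemma zq_add a b : zq (a + b) = (zq a + zq b)%Qc.
Proof. unfold Qcplus. apply Q2Qc_eq_iff. unfold zq. unfold Q2Qc. cbn [this]. rewrite !Qred_correct, inject_Z_plus. reflexivity. Qed.

Lemma zq_opp a : zq (- a) = (- zq a)%Qc.
Proof. unfold Qcopp. apply Q2Qc_eq_iff. unfold zq. unfold Q2Qc. cbn [this]. rewrite !Qred_correct, inject_Z_opp. reflexivity. Qed.

Lemma zq_zero : zq 0 = 0%Qc.
Proof. reflexivity. Qed.

Lemma zq_inj a b : zq a = zq b -> a = b.
Proof. unfold zq. intro E. apply Q2Qc_eq_iff in E. apply inject_Z_injective. exact E. Qed.

Section Prod.
Context {G : MLA}.
Definition PC := (G * (G -> Qc))%type.
Definition p_mul (x y : PC) : PC := (mul (fst x) (fst y), fun t => (snd x t + snd y t)%Qc).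
Definition p_one : PC := (one, fun _ => 0%Qc).
Definition p_inv (x : PC) : PC := (inv (fst x), fun t => (- snd x t)%Qc).
Definition p_star (x y : PC) : PC := (star (fst x) (fst y), fun _ => 0%Qc).

Lemma pc_eq (g g' : G) (f f' : G -> Qc) : g = g' -> (forall t, f t = f' t) -> (g, f) = (g', f').
Proof. intros E1 E2. f_equal; auto. apply functional_extensionality; auto. Qed.

Definition prodMLA : MLA.
Proof.
  refine (@Build_MLA PC p_mul p_one p_inv p_star _ _ _ _ _ _ _ _ _ _);
  intros; repeat match goal with p : PC |- _ => destruct p end; unfold p_mul, p_one, p_inv, p_star; simpl;
  apply pc_eq; intros; simpl; try ring.
  - apply mulA. - apply mul1x. - apply mulx1. - apply mulVx. - apply mulxV. - apply star_xx.
  - apply star_xM. - apply star_Mx. - apply star_jacobi. - apply star_conj.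
Defined.
End Prod.

Section Main.
Context {G K : MLA} {b : G -> K}.
Hypothesis hb : mla_hom b.
Hypothesis hN : forall n, b n = one -> MLZ G n.

Definition Nn (n : G) := b n = one.

Lemma Nn_one : Nn one. Proof. apply (hom_one hb). Qed.
Lemma Nn_mul x y : Nn x -> Nn y -> Nn (mul x y).
Proof. unfold Nn. intros H1 H2. rewrite (hom_mul hb), H1, H2, mulx1. reflexivity. Qed.
Lemma Nn_inv x : Nn x -> Nn (inv x).
Proof. unfold Nn. intros H1. rewrite (hom_inv hb), H1, inv_one. reflexivity. Qed.
Lemma Nn_center x : Nn x -> center G x. Proof. intro H. apply (hN _ H). Qed.
Lemma Nn_LZ x : Nn x -> LZ G x. Proof. intro H. apply (hN _ H). Qed.

Definition sgn (p : bool * G) : G := if fst p then snd p else inv (snd p).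
Definition sig (l : list (bool * G)) : G := fold_right (fun (p : bool * G) (acc : G) => mul (sgn p) acc) one l.
Definition eqd (x y : G) : {x = y} + {x <> y} := excluded_middle_informative (x = y).
Definition cnt (x : G) (l : list (bool * G)) : Z :=
  fold_right (fun (p : bool * G) (acc : Z) => ((if eqd (snd p) x then (if fst p then 1 else -1) else 0) + acc)%Z) 0%Z l.
Definition rest (n : G) (l : list (bool * G)) := filter (fun p => if eqd (snd p) n then false else true) l.
Definition flip (l : list (bool * G)) := map (fun p => (negb (fst p), snd p)) l.
Definition allN (l : list (bool * G)) := Forall (fun p => Nn (snd p)) l.

Lemma sgn_N p : Nn (snd p) -> Nn (sgn p).
Proof. destruct p as [[|] n]; unfold sgn; simpl; intro H; [exact H| apply Nn_inv; exact H]. Qed.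

Lemma sig_N l : allN l -> Nn (sig l).
Proof. induction 1; simpl. - apply Nn_one. - apply Nn_mul; auto. apply sgn_N; auto. Qed.

Lemma sig_app l l' : sig (l ++ l') = mul (sig l) (sig l').
Proof. induction l; simpl. - rewrite mul1x; reflexivity. - rewrite IHl, mulA. reflexivity. Qed.

Lemma cnt_app x l l' : cnt x (l ++ l') = (cnt x l + cnt x l')%Z.
Proof. induction l; simpl. - reflexivity. - rewrite IHl. lia. Qed.

Lemma sig_flip l : allN l -> sig (flip l) = inv (sig l).
Proof.
  induction 1 as [|p l Hp Hl IH]; simpl. - rewrite inv_one; reflexivity.
  - rewrite IH, inv_mul. destruct p as [[|] n]; unfold sgn; simpl; rewrite ?inv_inv; symmetry;
    apply (Nn_center _ (Nn_inv _ (sig_N _ Hl))).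
Qed.

Lemma cnt_flip x l : cnt x (flip l) = (- cnt x l)%Z.
Proof. induction l as [|[[|] n] l IH]; simpl; [reflexivity| |]; rewrite IH; destruct (eqd n x); lia. Qed.

Lemma allN_app l l' : allN l -> allN l' -> allN (l ++ l').
Proof. intros; apply Forall_app; split; auto. Qed.
Lemma allN_flip l : allN l -> allN (flip l).
Proof. induction 1; simpl; constructor; auto. Qed.
Lemma allN_rest n l : allN l -> allN (rest n l).
Proof. intro H. apply Forall_forall. intros p Hp. apply filter_In in Hp. apply (proj1 (Forall_forall _ _) H), Hp. Qed.

Lemma sgn_zpow p : sgn p = zpow (snd p) (if fst p then 1 else -1)%Z.
Proof. destruct p as [[|] n]; unfold sgn; simpl. - symmetry; apply zpow_one. - unfold zpow; simpl. rewrite mulx1. reflexivity. Qed.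

Lemma sig_split n l : allN l -> sig l = mul (zpow n (cnt n l)) (sig (rest n l)).
Proof.
  induction 1 as [|p l Hp Hl IH]; simpl. - rewrite mulx1. reflexivity.
  - unfold rest at 1. simpl. fold (rest n l). rewrite IH.
    destruct (eqd (snd p) n) as [E|E].
    + rewrite zpow_add, mulA, sgn_zpow, E. reflexivity.
    + simpl. rewrite mulA, (Nn_center _ (sgn_N _ Hp)), <- mulA. reflexivity.
Qed.

Lemma cnt_rest x n l : cnt x (rest n l) = if eqd x n then 0%Z else cnt x l.
Proof.
  induction l as [|p l IH]; simpl. - destruct (eqd x n); reflexivity.
  - unfold rest; simpl. fold (rest n l). destruct (eqd (snd p) n) as [E|E]; simpl.
    + rewrite IH. destruct (eqd x n); destruct (eqd (snd p) x); try lia. congruence.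
    + rewrite IH. destruct (eqd x n); destruct (eqd (snd p) x); try lia. congruence.
Qed.

Lemma rest_len n l : (length (rest n l) <= length l)%nat.
Proof. unfold rest. apply filter_length_le. Qed.

Lemma key_sig l : allN l -> (forall x, cnt x l = 0%Z) -> sig l = one.
Proof.
  remember (length l) as m. revert l Heqm. induction m as [m IHm] using (well_founded_induction lt_wf).
  intros l Em Hl Hc. destruct l as [|p l'].
  - reflexivity.
  - rewrite (sig_split (snd p) _ Hl), Hc, zpow_zero, mul1x.
    apply (IHm (length (rest (snd p) (p :: l')))); auto.
    + subst m. unfold rest; simpl. destruct (eqd (snd p) (snd p)) as [_|C]; [|congruence].
      fold (rest (snd p) l'). pose proof (rest_len (snd p) l'). simpl. lia.
    + apply allN_rest; auto.
    + intro x. rewrite cnt_rest. destruct (eqd x (snd p)); auto.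
Qed.

Definition Tset (p : @prodMLA G) : Prop :=
  exists l, allN l /\ fst p = inv (sig l) /\ forall t, snd p t = zq (cnt t l).

Lemma T1 : Tset one.
Proof. exists nil. split; [constructor|split]; simpl; [rewrite inv_one; reflexivity| reflexivity]. Qed.

Lemma TM x y : Tset x -> Tset y -> Tset (mul x y).
Proof.
  intros [l [Hl [E1 E2]]] [l' [Hl' [E1' E2']]]. exists (l ++ l'). split; [apply allN_app; auto|split].
  - simpl. unfold p_mul. simpl. rewrite E1, E1', sig_app, <- inv_mul. f_equal. symmetry. apply (Nn_center _ (sig_N _ Hl)).
  - intro t. simpl. unfold p_mul. simpl. rewrite E2, E2', cnt_app, zq_add. reflexivity.
Qed.

Lemma TI x : Tset x -> Tset (inv x).
Proof.
  intros [l [Hl [E1 E2]]]. exists (flip l). split; [apply allN_flip; auto|split].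
  - simpl. unfold p_inv. simpl. rewrite E1, sig_flip; auto.
  - intro t. simpl. unfold p_inv. simpl. rewrite E2, cnt_flip, zq_opp. reflexivity.
Qed.

Lemma T_N x : Tset x -> Nn (fst x).
Proof. intros [l [Hl [E1 _]]]. rewrite E1. apply Nn_inv, sig_N, Hl. Qed.

Lemma TC x : Tset x -> center prodMLA x.
Proof.
  intros HT y. destruct x as [g f], y as [g' f']. simpl. unfold p_mul. simpl. apply pc_eq.
  - apply (Nn_center _ (T_N _ HT)).
  - intro t. apply Qcplus_comm.
Qed.

Lemma TZ x : Tset x -> LZ prodMLA x.
Proof.
  intros HT y. destruct x as [g f], y as [g' f']. simpl. unfold p_star, p_one. simpl. apply pc_eq.
  - apply (Nn_LZ _ (T_N _ HT)).
  - reflexivity.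
Qed.

Definition Gr : MLA := quotMLA Tset T1 TM TI TC TZ.
Definition clsG (p : @prodMLA G) : Gr := cls Tset p.
Definition iota (g : G) : Gr := clsG (g, fun _ => 0%Qc).



Lemma clsG_hom : mla_hom clsG.
Proof. apply cls_hom. Qed.

Lemma clsG_ind (y : Gr) : exists p, y = clsG p.
Proof. apply quot_ind. Qed.

Lemma iota_hom : mla_hom iota.
Proof.
  split; intros x y; unfold iota.
  - rewrite <- (hom_mul clsG_hom). reflexivity.
  - rewrite <- (hom_star clsG_hom). reflexivity.
Qed.

Lemma iota_inj g g' : iota g = iota g' -> g = g'.
Proof.
  intro E. apply cls_eq_inv in E. destruct E as [l [Hl [E1 E2]]]. simpl in E1, E2.
  assert (Hc : forall t, cnt t l = 0%Z).
  { intro t. apply zq_inj. rewrite <- E2. rewrite zq_zero. ring. }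
  rewrite (key_sig _ Hl Hc), inv_one in E1.
  apply (mul_cancel_l (inv g)). rewrite mulVx. symmetry. exact E1. exact T1.
Qed.

Definition bq (y : Gr) : K := b (fst (rep Tset y)).

Lemma bq_cls p : bq (clsG p) = b (fst p).
Proof.
  unfold bq, clsG. pose proof (rel_rep Tset T1 p) as R. apply T_N in R. simpl in R. unfold Nn in R.
  rewrite (hom_mul hb), (hom_inv hb) in R.
  apply (mul_cancel_l (inv (b (fst (rep Tset (cls Tset p)))))). rewrite R, mulVx. reflexivity.
Qed.

Lemma bq_hom : mla_hom bq.
Proof.
  split; intros x y; destruct (clsG_ind x) as [p ->], (clsG_ind y) as [q ->].
  - rewrite <- (hom_mul clsG_hom), !bq_cls. apply (hom_mul hb).
  - rewrite <- (hom_star clsG_hom), !bq_cls. apply (hom_star hb).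
Qed.

Lemma bq_iota g : bq (iota g) = b g.
Proof. unfold iota. rewrite bq_cls. reflexivity. Qed.

Definition Nq (y : Gr) := bq y = one.

Lemma Nq_center y : Nq y -> center Gr y.
Proof.
  intros H z. destruct (clsG_ind y) as [p ->], (clsG_ind z) as [q ->].
  unfold Nq in H. rewrite bq_cls in H.
  rewrite <- !(hom_mul clsG_hom). f_equal. destruct p as [g f], q as [g' f']. simpl. unfold p_mul. simpl.
  apply pc_eq. - apply (Nn_center _ H). - intro t. apply Qcplus_comm.
Qed.

Lemma Nq_LZ y : Nq y -> LZ Gr y.
Proof.
  intros H z. destruct (clsG_ind y) as [p ->], (clsG_ind z) as [q ->].
  unfold Nq in H. rewrite bq_cls in H.
  rewrite <- !(hom_star clsG_hom). rewrite <- (hom_one clsG_hom). f_equal. destruct p as [g f], q as [g' f']. simpl. unfold p_star, p_one. simpl.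
  apply pc_eq. - apply (Nn_LZ _ H). - reflexivity.
Qed.

Lemma Nq_one : Nq one. Proof. apply (hom_one bq_hom). Qed.
Lemma Nq_mul x y : Nq x -> Nq y -> Nq (mul x y).
Proof. unfold Nq. intros H1 H2. rewrite (hom_mul bq_hom), H1, H2, mulx1. reflexivity. Qed.
Lemma Nq_inv x : Nq x -> Nq (inv x).
Proof. unfold Nq. intros H1. rewrite (hom_inv bq_hom), H1, inv_one. reflexivity. Qed.

Lemma Gr_decomp y : exists g n, Nq n /\ y = mul (iota g) n.
Proof.
  destruct (clsG_ind y) as [[g f] ->]. exists g, (clsG (one, f)). split.
  - unfold Nq. rewrite bq_cls. apply (hom_one hb).
  - unfold iota. rewrite <- (hom_mul clsG_hom). f_equal. simpl. unfold p_mul. simpl. apply pc_eq.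
    + rewrite mulx1; reflexivity.
    + intro t. ring.
Qed.

Lemma pow_pc (h : G -> Qc) (k : nat) : pow ((one, h) : @prodMLA G) k = (one, fun t => (zq (Z.of_nat k) * h t)%Qc).
Proof.
  induction k.
  - simpl. apply pc_eq; auto. intro t. rewrite zq_zero. ring.
  - simpl pow. rewrite IHk. simpl. unfold p_mul. simpl. apply pc_eq.
    + apply mul1x.
    + intro t. replace (Z.pos (Pos.of_succ_nat k)) with (1 + Z.of_nat k)%Z by lia. rewrite zq_add. change (zq 1) with 1%Qc. ring.
Qed.

Lemma Gr_div n (k : nat) : Nq n -> k <> O -> exists m, Nq m /\ pow m k = n.
Proof.
  intros Hn Hk. destruct (clsG_ind n) as [[g f] ->]. unfold Nq in Hn. rewrite bq_cls in Hn. simpl in Hn.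
  set (e := fun t => zq (cnt t ((true, g) :: nil))).
  exists (clsG (one, fun t => (/ zq (Z.of_nat k) * (f t + e t))%Qc)). split.
  - unfold Nq. rewrite bq_cls. apply (hom_one hb).
  - rewrite <- (hom_pow _ _ _ _ _ clsG_hom), pow_pc. apply (cls_eq Tset TM TI).
    exists ((false, g) :: nil). split; [constructor; [exact Hn|constructor]|split].
    + simpl. unfold sgn. simpl. gsimpl. reflexivity.
    + intro t. simpl. unfold e. simpl.
      assert (Hz : zq (Z.of_nat k) <> 0%Qc).
      { intro E. rewrite <- zq_zero in E. apply zq_inj in E. lia. }
      destruct (eqd g t); simpl; [replace (zq (-1)) with (- zq 1)%Qc by (rewrite <- zq_opp; reflexivity)|]; rewrite ?zq_zero; set (kq := zq (Z.of_nat k)) in *; clearbody kq; field; exact Hz.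
Qed.

Lemma Nq_iota g : Nq (iota g) <-> Nn g.
Proof. unfold Nq, Nn. rewrite bq_iota. tauto. Qed.



Lemma Gr_commg_iota (y z : Gr) : exists g g', commg y z = iota (commg g g').
Proof.
  destruct (Gr_decomp y) as [g [n [Hn ->]]], (Gr_decomp z) as [g' [n' [Hn' ->]]].
  exists g, g'. rewrite (commg_Mc _ _ _ (Nq_center _ Hn)), (commg_cM _ _ _ (Nq_center _ Hn')).
  symmetry. apply (hom_commg iota_hom).
Qed.

Lemma Gr_star_iota (y z : Gr) : exists g g', star y z = iota (star g g').
Proof.
  destruct (Gr_decomp y) as [g [n [Hn ->]]], (Gr_decomp z) as [g' [n' [Hn' ->]]].
  exists g, g'. rewrite (star_Mc _ _ _ (Nq_LZ _ Hn)), (star_cM _ _ _ (Nq_LZ _ Hn')).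
  symmetry. apply (hom_star iota_hom).
Qed.

Definition Fam (X : Gr -> Prop) :=
  subgroup X /\ (forall g, MGG G g -> X (iota g)) /\
  (forall z, X z -> Nq z -> exists g, MGG G g /\ Nn g /\ z = iota g).

Lemma Fam_conj X x z : Fam X -> X x -> X (conjl z x).
Proof.
  intros [[X1 [XM XI]] [XG _]] Hx.
  replace (conjl z x) with (mul (commg z x) x) by (unfold conjl, commg; gsimpl; reflexivity).
  apply XM; auto. destruct (Gr_commg_iota z x) as [g [g' ->]]. apply XG, MGG_commg.
Qed.

Lemma exists_min_nat (P : nat -> Prop) : (exists n, P n) -> exists n, P n /\ forall m, P m -> (n <= m)%nat.
Proof.
  intros [n Hn]. revert Hn. induction n as [n IH] using (well_founded_induction lt_wf). intro Hn.
  destruct (classic (exists m, P m /\ (m < n)%nat)) as [[m [Pm Lm]]|NE].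
  - apply (IH m Lm Pm).
  - exists n. split; auto. intros m Pm. destruct (Nat.lt_ge_cases m n) as [L|L]; auto.
    exfalso. apply NE. eauto.
Qed.

Lemma zclosed_mult (S : Z -> Prop) : S 0%Z -> (forall i j, S i -> S j -> S (i + j)%Z) -> (forall i, S i -> S (- i)%Z) ->
  forall k q, S k -> S (q * k)%Z.
Proof.
  intros S0 SA SN k q Sk. induction q using Z.peano_ind.
  - exact S0.
  - replace (Z.succ q * k)%Z with (q * k + k)%Z by lia. auto.
  - replace (Z.pred q * k)%Z with (q * k + - k)%Z by lia. auto.
Qed.

Lemma pow_inv {M : MLA} (m : M) (k : nat) : pow (inv m) k = inv (pow m k).
Proof.
  induction k; simpl. - rewrite inv_one; reflexivity.
  - rewrite IHk, <- inv_mul. f_equal. change (mul (pow m k) m = mul m (pow m k)).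
    pose proof (pow_comm m k 1) as E. simpl in E. rewrite mulx1 in E. exact E.
Qed.

Section Ext.
Variable A : Gr -> Prop.
Hypothesis FA : Fam A.

Definition XN (z : Gr) := exists x n, A x /\ Nq n /\ z = mul x n.

Lemma XN_one : XN one.
Proof. exists one, one. destruct FA as [[A1 _] _]. split; auto. split; [apply Nq_one|]. rewrite mulx1; reflexivity. Qed.

Lemma XN_mul z z' : XN z -> XN z' -> XN (mul z z').
Proof.
  intros [x [n [Hx [Hn ->]]]] [x' [n' [Hx' [Hn' ->]]]]. destruct FA as [[_ [AM _]] _].
  exists (mul x x'), (mul n n'). split; [auto|split; [apply Nq_mul; auto|]].
  rewrite (mul_c_r x n (mul x' n') (Nq_center _ Hn)). gsimpl. rewrite <- (mulA _ (mul x x') n' n), <- (mulA _ (mul x x') n n'), (Nq_center _ Hn n'). reflexivity.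
Qed.

Lemma XN_inv z : XN z -> XN (inv z).
Proof.
  intros [x [n [Hx [Hn ->]]]]. destruct FA as [[_ [_ AI]] _].
  exists (inv x), (inv n). split; [auto|split; [apply Nq_inv; auto|]].
  rewrite inv_mul. apply (Nq_center _ (Nq_inv _ Hn)).
Qed.

Definition Aext (y : Gr) (z : Gr) := exists x j, A x /\ z = mul x (zpow y j).

Lemma Aext_Fam y : (forall j, XN (zpow y j) -> A (zpow y j)) -> Fam (Aext y).
Proof.
  intro Hs. pose proof FA as [[A1 [AM AI]] [AG AN]].
  split; [split; [|split]|split].
  - exists one, 0%Z. split; auto. rewrite zpow_zero, mulx1. reflexivity.
  - intros z1 z2 [x1 [j1 [H1 ->]]] [x2 [j2 [H2 ->]]].
    exists (mul x1 (conjl (zpow y j1) x2)), (j1 + j2)%Z. split.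
    + apply AM; auto. apply Fam_conj; auto.
    + rewrite zpow_add. unfold conjl. gsimpl. reflexivity.
  - intros z [x [j [H ->]]]. exists (conjl (inv (zpow y j)) (inv x)), (- j)%Z. split.
    + apply Fam_conj; auto.
    + rewrite zpow_opp. unfold conjl. gsimpl. reflexivity.
  - intros g Hg. exists (iota g), 0%Z. split; auto. rewrite zpow_zero, mulx1. reflexivity.
  - intros z [x [j [H ->]]] Hz. apply AN; auto. apply AM; auto. apply Hs.
    exists (inv x), (mul x (zpow y j)). split; auto. split; auto. gsimpl. reflexivity.
Qed.

Lemma Aext_sub y x : A x -> Aext y x.
Proof. intro H. exists x, 0%Z. split; auto. rewrite zpow_zero, mulx1. reflexivity. Qed.

Lemma Aext_y y : Aext y y.
Proof. exists one, 1%Z. destruct FA as [[A1 _] _]. split; auto. rewrite zpow_one, mul1x. reflexivity. Qed.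

Hypothesis Amax : forall B, (forall x, A x -> B x) -> Fam B -> forall x, B x -> A x.

Lemma Fam_max_full y0 : XN y0.
Proof.
  apply NNPP; intro Hy0.
  pose proof FA as [[A1 [AM AI]] [AG AN]].
  set (Sz := fun j => XN (zpow y0 j)).
  assert (S0 : Sz 0%Z) by apply XN_one.
  assert (SA : forall i j, Sz i -> Sz j -> Sz (i + j)%Z) by (intros i j Hi Hj; unfold Sz; rewrite zpow_add; apply XN_mul; auto).
  assert (SN : forall i, Sz i -> Sz (- i)%Z) by (intros i Hi; unfold Sz; rewrite zpow_opp; apply XN_inv; auto).
  assert (Key : exists y', ~ A y' /\ forall j, XN (zpow y' j) -> A (zpow y' j)).
  { destruct (classic (exists j, j <> 0%Z /\ Sz j)) as [[j [Hj0 Hj]]|NE].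
    - assert (Hex : exists k, (0 < k)%nat /\ Sz (Z.of_nat k)).
      { exists (Z.abs_nat j). split; [lia|]. destruct (Z.le_gt_cases 0 j).
        + replace (Z.of_nat (Z.abs_nat j)) with j by lia. exact Hj.
        + replace (Z.of_nat (Z.abs_nat j)) with (- j)%Z by lia. auto. }
      destruct (exists_min_nat _ Hex) as [k [[Hk0 Hk] Hmin]].
      assert (Hdiv : forall j, Sz j -> exists q, j = (q * Z.of_nat k)%Z).
      { intros i Hi. exists (i / Z.of_nat k)%Z.
        pose proof (Z.div_mod i (Z.of_nat k) ltac:(lia)) as Ed.
        pose proof (Z.mod_pos_bound i (Z.of_nat k) ltac:(lia)) as Eb.
        set (r := (i mod Z.of_nat k)%Z) in *. set (q := (i / Z.of_nat k)%Z) in *.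
        assert (Sr : Sz r).
        { replace r with (i + (- q) * Z.of_nat k)%Z by lia. apply SA; auto. apply zclosed_mult; auto. }
        destruct (Z.eq_dec r 0) as [R0|R0]; [lia|].
        exfalso. assert (L : (k <= Z.to_nat r)%nat).
        { apply Hmin. split; [lia|]. replace (Z.of_nat (Z.to_nat r)) with r by lia. exact Sr. }
        lia. }
      destruct Hk as [x0 [n0 [Hx0 [Hn0 E0]]]].
      destruct (Gr_div n0 k Hn0 ltac:(lia)) as [m [Hm Em]].
      assert (Cm : mul y0 (inv m) = mul (inv m) y0) by (symmetry; apply (Nq_center _ (Nq_inv _ Hm))).
      exists (mul y0 (inv m)). split.
      + intro HA. apply Hy0. exists (mul y0 (inv m)), m. split; auto. split; auto. gsimpl. reflexivity.
      + assert (NZ : forall j, Nq (zpow (inv m) j)).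
        { intro i. apply subgroup_zpow; [split; [apply Nq_one|split; [apply Nq_mul|apply Nq_inv]]|apply Nq_inv; auto]. }
        intros i Hi. rewrite (zpow_mul_comm _ _ _ Cm) in *.
        assert (Si : Sz i).
        { unfold Sz. replace (zpow y0 i) with (mul (mul (zpow y0 i) (zpow (inv m) i)) (inv (zpow (inv m) i))) by (gsimpl; reflexivity).
          apply XN_mul; auto. exists one, (inv (zpow (inv m) i)). split; auto. split; [apply Nq_inv; auto|]. rewrite mul1x. reflexivity. }
        destruct (Hdiv i Si) as [q ->].
        rewrite <- (zpow_mul_comm _ _ _ Cm).
        apply (zclosed_mult (fun i => A (zpow (mul y0 (inv m)) i))).
        * rewrite zpow_zero. auto.
        * intros a c Ha Hc. rewrite zpow_add. auto.
        * intros a Ha. rewrite zpow_opp. auto.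
        * rewrite (zpow_mul_comm _ _ _ Cm), E0, zpow_nat, pow_inv, Em. gsimpl. exact Hx0.
    - exists y0. split.
      + intro HA. apply Hy0. exists y0, one. split; auto. split; [apply Nq_one|]. rewrite mulx1. reflexivity.
      + intros i Hi. destruct (Z.eq_dec i 0) as [->|Hi0].
        * rewrite zpow_zero. auto.
        * exfalso. apply NE. exists i. split; auto. }
  destruct Key as [y' [NA Hs]].
  apply NA. apply (Amax (Aext y')).
  - apply Aext_sub.
  - apply Aext_Fam; auto.
  - apply Aext_y.
Qed.
End Ext.

Lemma exists_full : exists A, Fam A /\ forall y, XN A y.
Proof.
  set (P' := fun X : Gr -> Prop => (forall z, ~ X z) \/ Fam X).
  assert (FamB : Fam (fun z => exists g, MGG G g /\ z = iota g)).
  { split; [split; [|split]|split].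
    - exists one. split; [apply MGG_one|]. symmetry; apply (hom_one iota_hom).
    - intros z1 z2 [g1 [H1 ->]] [g2 [H2 ->]]. exists (mul g1 g2). split; [apply MGG_mul; auto|]. symmetry; apply (hom_mul iota_hom).
    - intros z [g [H ->]]. exists (inv g). split; [apply MGG_inv; auto|]. symmetry; apply (hom_inv iota_hom).
    - intros g Hg. eauto.
    - intros z [g [H ->]] Hz. exists g. split; auto. split; auto. apply Nq_iota; auto. }
  destruct (zorn_sets _ P') as [A [PA Amax]].
  - intros F HF Ht. destruct (classic (exists X, F X /\ Fam X)) as [[X0 [FX0 Fam0]]|NF].
    + right. 
      assert (NE : forall X z, F X -> X z -> Fam X).
      { intros X z FX Xz. destruct (HF X FX) as [E|Fm]; auto. exfalso; apply (E z Xz). }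
      split; [split; [|split]|split].
      * exists X0. split; auto. apply (proj1 (proj1 Fam0)).
      * intros z1 z2 [X1 [F1 H1]] [X2 [F2 H2]]. destruct (Ht X1 X2 F1 F2) as [S|S].
        -- exists X2. split; auto. destruct (NE X2 z2 F2 H2) as [[_ [M _]] _]; apply M; auto.
        -- exists X1. split; auto. destruct (NE X1 z1 F1 H1) as [[_ [M _]] _]; apply M; auto.
      * intros z [X1 [F1 H1]]. exists X1. split; auto. destruct (NE X1 z F1 H1) as [[_ [_ I]] _]; apply I; auto.
      * intros g Hg. exists X0. split; auto. apply (proj1 (proj2 Fam0)); auto.
      * intros z [X1 [F1 H1]] Hz. apply (proj2 (proj2 (NE X1 z F1 H1))); auto.
    + left. intros z [X [FX Xz]]. destruct (HF X FX) as [E|Fm].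
      * apply (E z Xz).
      * apply NF. eauto.
  - assert (FA : Fam A).
    { destruct PA as [E|Fm]; auto. exfalso.
      apply (E one). apply (Amax (fun z => exists g, MGG G g /\ z = iota g)).
      - intros x Ax. exfalso; apply (E x Ax).
      - right; exact FamB.
      - exists one. split; [apply MGG_one|]. symmetry; apply (hom_one iota_hom). }
    exists A. split; auto. intro y. apply Fam_max_full; auto.
    intros B AB FB. apply Amax; auto. right; exact FB.
Qed.



Section Final.
Variable A : Gr -> Prop.
Hypothesis FA : Fam A.
Hypothesis Hfull : forall y, XN A y.
Hypothesis hsurj : forall k, exists g, b g = k.

Lemma A1' : A one. Proof. exact (proj1 (proj1 FA)). Qed.
Lemma AM' u v : A u -> A v -> A (mul u v). Proof. exact (proj1 (proj2 (proj1 FA)) u v). Qed.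
Lemma AI' u : A u -> A (inv u). Proof. exact (proj2 (proj2 (proj1 FA)) u). Qed.
Lemma AG' g : MGG G g -> A (iota g). Proof. exact (proj1 (proj2 FA) g). Qed.
Lemma AN' z : A z -> Nq z -> exists g, MGG G g /\ Nn g /\ z = iota g. Proof. exact (proj2 (proj2 FA) z). Qed.
Lemma AS' u v : A u -> A v -> A (star u v).
Proof. intros _ _. destruct (Gr_star_iota u v) as [g [g' ->]]. apply AG', MGG_star. Qed.

Definition GA : MLA := subMLA A A1' AM' AI' AS'.
Lemma GA_val_mul (x y : GA) : proj1_sig (mul x y) = mul (proj1_sig x) (proj1_sig y). Proof. reflexivity. Qed.
Lemma GA_val_inv (x : GA) : proj1_sig (inv x) = inv (proj1_sig x). Proof. reflexivity. Qed.
Lemma GA_val_star (x y : GA) : proj1_sig (star x y) = star (proj1_sig x) (proj1_sig y). Proof. reflexivity. Qed.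
Lemma GA_val_one : proj1_sig (one : GA) = one. Proof. reflexivity. Qed.
Definition bA (x : GA) : K := bq (proj1_sig x).
Definition HP (x : GA) : Prop := Nq (proj1_sig x).
Lemma HP1 : HP one. Proof. apply Nq_one. Qed.
Lemma HPM x y : HP x -> HP y -> HP (mul x y). Proof. apply Nq_mul. Qed.
Lemma HPI x : HP x -> HP (inv x). Proof. apply Nq_inv. Qed.
Lemma HPS x y : HP x -> HP y -> HP (star x y).
Proof. unfold HP, Nq. intros H1 H2. change (bq (star (proj1_sig x) (proj1_sig y)) = one). rewrite (hom_star bq_hom), H1, H2. apply star_xx. Qed.
Definition HA : MLA := subMLA (G:=GA) HP HP1 HPM HPI HPS.
Definition aA (x : HA) : GA := proj1_sig x.

Definition mu (g : G) : GA :=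
  match excluded_middle_informative (MGG G g) with
  | left Hg => (exist _ (iota g) (AG' g Hg) : GA)
  | right _ => one
  end.

Lemma mu_val g : MGG G g -> proj1_sig (mu g) = iota g.
Proof. intro Hg. unfold mu. destruct (excluded_middle_informative (MGG G g)) as [H|H]; [reflexivity|contradiction]. Qed.

Lemma GA_eq (x y : GA) : proj1_sig x = proj1_sig y -> x = y.
Proof. apply sub_eq. Qed.

Lemma decompA (y : Gr) : exists (w : GA) n, Nq n /\ y = mul (proj1_sig w) n.
Proof. destruct (Hfull y) as [x [n [Hx [Hn E]]]]. exists (exist _ x Hx : GA), n. auto. Qed.

Lemma mu_starGG g : starGG G g -> starGG GA (mu g).
Proof.
  intros Hg L HL Hs.
  set (P := fun h => exists y : GA, L y /\ proj1_sig y = iota h).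
  assert (HP' : P g).
  { apply Hg.
    - destruct HL as [[L1 [LM LI]] [LC LS]]. split; [split; [|split]|split].
      + exists one. split; [auto|]. symmetry; apply (hom_one iota_hom).
      + intros h1 h2 [y1 [L1' E1]] [y2 [L2' E2]]. exists (mul y1 y2). split; [auto|]. cbn [GA subMLA mul inv star one s_mul s_inv s_star s_one proj1_sig]. rewrite E1, E2. symmetry; apply (hom_mul iota_hom).
      + intros h1 [y1 [L1' E1]]. exists (inv y1). split; [auto|]. cbn [GA subMLA mul inv star one s_mul s_inv s_star s_one proj1_sig]. rewrite E1. symmetry; apply (hom_inv iota_hom).
      + intros h l [y [Ly E]]. destruct (decompA (iota h)) as [w [n [Hn Ew]]].
        exists (conjl w y). split; auto. rewrite (hom_conjl iota_hom), Ew, (conjl_Mc (proj1_sig w) n (iota l) (Nq_center _ Hn)), <- E. reflexivity.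
      + intros h l [y [Ly E]]. destruct (decompA (iota h)) as [w [n [Hn Ew]]].
        exists (star w y). split; auto. rewrite (hom_star iota_hom), Ew, (star_Mc (proj1_sig w) n (iota l) (Nq_LZ _ Hn)), <- E. reflexivity.
    - intros h h'. destruct (decompA (iota h)) as [w [n [Hn Ew]]]. destruct (decompA (iota h')) as [w' [n' [Hn' Ew']]].
      exists (star w w'). split; auto. rewrite (hom_star iota_hom), Ew, Ew', (star_Mc (proj1_sig w) n (mul (proj1_sig w') n') (Nq_LZ _ Hn)), (star_cM (proj1_sig w) (proj1_sig w') n' (Nq_LZ _ Hn')). reflexivity. }
  destruct HP' as [y [Ly E]]. replace (mu g) with y; auto. apply GA_eq. rewrite E, mu_val; auto.
  exists g, one. split; auto. split; [apply commGG_one|]. rewrite mulx1; reflexivity.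
Qed.

Lemma mu_commGG g : commGG G g -> commGG GA (mu g).
Proof.
  intros Hg S HS Hs.
  set (P := fun h => exists y : GA, S y /\ proj1_sig y = iota h).
  assert (HP' : P g).
  { apply Hg.
    - destruct HS as [S1 [SM SI]]. split; [|split].
      + exists one. split; [auto|]. symmetry; apply (hom_one iota_hom).
      + intros h1 h2 [y1 [L1' E1]] [y2 [L2' E2]]. exists (mul y1 y2). split; [auto|]. cbn [GA subMLA mul inv star one s_mul s_inv s_star s_one proj1_sig]. rewrite E1, E2. symmetry; apply (hom_mul iota_hom).
      + intros h1 [y1 [L1' E1]]. exists (inv y1). split; [auto|]. cbn [GA subMLA mul inv star one s_mul s_inv s_star s_one proj1_sig]. rewrite E1. symmetry; apply (hom_inv iota_hom).
    - intros h h'. destruct (decompA (iota h)) as [w [n [Hn Ew]]]. destruct (decompA (iota h')) as [w' [n' [Hn' Ew']]].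
      exists (commg w w'). split; auto. rewrite (hom_commg iota_hom), Ew, Ew', (commg_Mc (proj1_sig w) n (mul (proj1_sig w') n') (Nq_center _ Hn)), (commg_cM (proj1_sig w) (proj1_sig w') n' (Nq_center _ Hn')). reflexivity. }
  destruct HP' as [y [Ly E]]. replace (mu g) with y; auto. apply GA_eq. rewrite E, mu_val; auto.
  exists one, g. split; [apply starGG_one|]. split; auto. rewrite mul1x; reflexivity.
Qed.

Lemma starGG_MGG g : starGG G g -> MGG G g.
Proof. intro H. exists g, one. split; auto. split; [apply commGG_one|]. rewrite mulx1; reflexivity. Qed.
Lemma commGG_MGG g : commGG G g -> MGG G g.
Proof. intro H. exists one, g. split; [apply starGG_one|]. split; auto. rewrite mul1x; reflexivity. Qed.

Lemma mu_mul x y : MGG G x -> MGG G y -> mu (mul x y) = mul (mu x) (mu y).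
Proof. intros Hx Hy. apply GA_eq. cbn [GA subMLA mul inv star one s_mul s_inv s_star s_one proj1_sig]. rewrite !mu_val; auto. apply (hom_mul iota_hom). apply MGG_mul; auto. Qed.

Lemma mu_MGG x : MGG G x -> MGG GA (mu x).
Proof.
  intros Hx. destruct Hx as [a [c [Ha [Hc E]]]]. subst x.
  exists (mu a), (mu c). split; [apply mu_starGG; auto|split; [apply mu_commGG; auto|]].
  apply mu_mul; [apply starGG_MGG|apply commGG_MGG]; auto.
Qed.

Lemma GA_starGG z : starGG GA z -> exists g, starGG G g /\ proj1_sig z = iota g.
Proof.
  intro Hz. apply Hz.
  - split; [split; [|split]|split].
    + exists one. split; [apply starGG_one|]. symmetry; apply (hom_one iota_hom).
    + intros y1 y2 [g1 [H1 E1]] [g2 [H2 E2]]. exists (mul g1 g2). split; [apply starGG_mul; auto|]. cbn [GA subMLA mul inv star one s_mul s_inv s_star s_one proj1_sig]. rewrite E1, E2. symmetry; apply (hom_mul iota_hom).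
    + intros y1 [g1 [H1 E1]]. exists (inv g1). split; [apply starGG_inv; auto|]. cbn [GA subMLA mul inv star one s_mul s_inv s_star s_one proj1_sig]. rewrite E1. symmetry; apply (hom_inv iota_hom).
    + intros w y [g1 [H1 E1]]. destruct (Gr_decomp (proj1_sig w)) as [h [n [Hn Ew]]].
      exists (conjl h g1). split; [apply starGG_conj; auto|]. change (proj1_sig (conjl w y)) with (conjl (proj1_sig w) (proj1_sig y)).
      rewrite Ew, E1, (conjl_Mc (iota h) n (iota g1) (Nq_center _ Hn)). symmetry; apply (hom_conjl iota_hom).
    + intros w y [g1 [H1 E1]]. destruct (Gr_decomp (proj1_sig w)) as [h [n [Hn Ew]]].
      exists (star h g1). split; [apply starGG_starr; auto|]. cbn [GA subMLA mul inv star one s_mul s_inv s_star s_one proj1_sig].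
      rewrite Ew, E1, (star_Mc (iota h) n (iota g1) (Nq_LZ _ Hn)). symmetry; apply (hom_star iota_hom).
  - intros w w'. cbn [GA subMLA mul inv star one s_mul s_inv s_star s_one proj1_sig]. destruct (Gr_star_iota (proj1_sig w) (proj1_sig w')) as [g [g' E]].
    exists (star g g'). split; [apply starGG_star|exact E].
Qed.

Lemma GA_commGG z : commGG GA z -> exists g, commGG G g /\ proj1_sig z = iota g.
Proof.
  intro Hz. apply Hz.
  - split; [|split].
    + exists one. split; [apply commGG_one|]. symmetry; apply (hom_one iota_hom).
    + intros y1 y2 [g1 [H1 E1]] [g2 [H2 E2]]. exists (mul g1 g2). split; [apply commGG_mul; auto|]. cbn [GA subMLA mul inv star one s_mul s_inv s_star s_one proj1_sig]. rewrite E1, E2. symmetry; apply (hom_mul iota_hom).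
    + intros y1 [g1 [H1 E1]]. exists (inv g1). split; [apply commGG_inv; auto|]. cbn [GA subMLA mul inv star one s_mul s_inv s_star s_one proj1_sig]. rewrite E1. symmetry; apply (hom_inv iota_hom).
  - intros w w'. destruct (Gr_commg_iota (proj1_sig w) (proj1_sig w')) as [g [g' E]].
    exists (commg g g'). split; [apply commGG_commg|]. cbn [GA subMLA mul inv star one s_mul s_inv s_star s_one proj1_sig]. exact E.
Qed.

Lemma bA_hom : mla_hom bA.
Proof. split; intros x y; unfold bA; simpl; [apply (hom_mul bq_hom)|apply (hom_star bq_hom)]. Qed.

Lemma lift_fiber (g : G) (h : GA) : bA h = b g -> exists n, Nq n /\ proj1_sig h = mul (iota g) n.
Proof.
  intro E. exists (mul (inv (iota g)) (proj1_sig h)). split.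
  - unfold Nq. rewrite (hom_mul bq_hom), (hom_inv bq_hom), bq_iota. unfold bA in E. rewrite E. apply mulVx.
  - gsimpl. reflexivity.
Qed.

Lemma final_stem (H0 : MLA) (a0 : H0 -> G) : stem_ext aA bA /\ isoclinic a0 b aA bA.
Proof.
  assert (SE : short_exact aA bA).
  { refine (conj _ (conj _ (conj _ (conj _ _)))).
    + split; intros; reflexivity.
    + exact bA_hom.
    + intros x y E. apply sub_eq. exact E.
    + intro k. destruct (hsurj k) as [g Eg]. destruct (decompA (iota g)) as [w [n [Hn Ew]]].
      exists w. unfold bA. rewrite <- Eg, <- bq_iota, Ew, (hom_mul bq_hom), Hn, mulx1. reflexivity.
    + intro g. split.
      * intro E. exists (exist _ g E : HA). reflexivity.
      * intros [h <-]. exact (proj2_sig h). }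
  assert (CE : central_ext aA bA).
  { split; [exact SE|]. intro h. split.
    * intro y. apply GA_eq. apply (Nq_LZ _ (proj2_sig h)).
    * intro y. apply GA_eq. apply (Nq_center _ (proj2_sig h)). }
  split; [split; [exact CE|]|].
  - intro h. destruct (AN' (proj1_sig (aA h)) (proj2_sig (aA h)) (proj2_sig h)) as [g [Hg [_ E]]].
      replace (aA h) with (mu g). { apply mu_MGG; auto. }
      apply GA_eq. rewrite mu_val; auto.
  - exists (fun k => k), mu. split; [|split].
    + split; [split; reflexivity|split]; eauto.
    + split; [|split; [|split; [|split]]].
      * apply mu_MGG.
      * apply mu_mul.
      * intros x y Hx Hy. apply GA_eq. cbn [GA subMLA mul inv star one s_mul s_inv s_star s_one proj1_sig]. rewrite !mu_val; auto. apply (hom_star iota_hom). apply MGG_star.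
      * intros x y Hx Hy E. apply iota_inj. rewrite <- (mu_val x), <- (mu_val y); auto. rewrite E. reflexivity.
      * intros z [a [c [Ha [Hc E]]]].
        destruct (GA_starGG a Ha) as [g1 [H1 E1]]. destruct (GA_commGG c Hc) as [g2 [H2 E2]].
        exists (mul g1 g2). split.
        -- exists g1, g2. auto.
        -- apply GA_eq. rewrite mu_val, (hom_mul iota_hom), E. cbn [GA subMLA mul inv star one s_mul s_inv s_star s_one proj1_sig]. rewrite E1, E2. reflexivity.
           exists g1, g2. auto.
    + intros g g' h h' E E'.
      destruct (lift_fiber g h E) as [n [Hn En]]. destruct (lift_fiber g' h' E') as [n' [Hn' En']].
      split; apply GA_eq; rewrite mu_val; [| apply MGG_commg | | apply MGG_star]; cbn [GA subMLA mul inv star one s_mul s_inv s_star s_one proj1_sig].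
      * change (proj1_sig (commg h h')) with (commg (proj1_sig h) (proj1_sig h')). rewrite En, En', (commg_Mc (iota g) n (mul (iota g') n') (Nq_center _ Hn)), (commg_cM (iota g) (iota g') n' (Nq_center _ Hn')).
        apply (hom_commg iota_hom).
      * rewrite En, En', (star_Mc (iota g) n (mul (iota g') n') (Nq_LZ _ Hn)), (star_cM (iota g) (iota g') n' (Nq_LZ _ Hn')). apply (hom_star iota_hom).
Qed.
End Final.

End Main.

Theorem proposition4p12 (H G K : MLA) (a : H -> G) (b : G -> K) :
  central_ext a b ->
  exists (H' G' K' : MLA) (a' : H' -> G') (b' : G' -> K'),
    stem_ext a' b' /\ isoclinic a b a' b'.
Proof.
  intros [[ha [hb [ainj [bsurj bex]]]] hcen].
  assert (hN : forall n, b n = one -> MLZ G n).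
  { intros n E. destruct (proj1 (bex n) E) as [h <-]. apply hcen. }
  destruct (exists_full hb hN) as [A [FA Hfull]].
  exists (HA hb hN A FA), (GA hb hN A FA), K, (aA hb hN A FA), (bA hb hN A FA).
  exact (final_stem hb hN A FA Hfull bsurj H a).
Qed.
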